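(* Let $X$ be a second countable locally compact Hausdorff space and $T\colon X\to X$ a continuous, locally injective map. Then the saturated critical set $G_\Lambda$ is meagre if and only if the critical point set $C=\{x\in X: T\text{ is not open at }x\}$ is meagre.
   Context: $T$ is open at $x$ if for every neighbourhood $U$ of $x$, $T(x)\in\mathrm{int}(T(U))$. The transfer operator with weight $1$ is $\Lambda(f)(x)=\sum_{y\in T^{-1}(x)}f(y)$ for $f\in C_c(X)$. The critical value set is $C_\Lambda=\{x\in X:\Lambda(f)\text{ is not continuous at }x\text{ for some }f\in C_c(X)\}$, the post-critical set is $P_\Lambda=\bigcup_{n\ge0}T^n(C_\Lambda)$, and the saturated critical set is $G_\Lambda=\bigcup_{k\ge0}T^{-k}(P_\Lambda)$ ($T$ is called sparsely critically saturated when $G_\Lambda$ is meagre). A set is meagre if it is a countable union of sets whose closures have empty interior. *)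

(* Defs.v *)
From HB Require Import structures.
From mathcomp Require Import all_boot all_order all_algebra.
From mathcomp Require Import all_classical all_reals all_analysis.
Set Implicit Arguments. Unset Strict Implicit. Unset Printing Implicit Defensive.
Import Order.TTheory GRing.Theory Num.Theory numFieldNormedType.Exports.
Local Open Scope classical_set_scope.
Local Open Scope ring_scope.

Section Defs.
Context {X : topologicalType} {R : realType}.

Definition Cc (f : X -> R) : Prop :=
  continuous f /\ compact (closure [set x | f x != 0]).

(* transfer operator with weight 1: Lambda(f)(x) = sum_{y in T^{-1}(x)} f y *)
Definition transfer (T : X -> X) (f : X -> R) (x : X) : R :=
  \sum_(y \in T @^-1` [set x]) f y.

Definition crit_values (T : X -> X) : set X :=
  [set x | exists f : X -> R, Cc f /\ ~ {for x, continuous (transfer T f)}].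

Definition post_crit (T : X -> X) : set X :=
  \bigcup_(n in [set: nat]) ((iter n T) @` crit_values T).

Definition sat_crit (T : X -> X) : set X :=
  \bigcup_(k in [set: nat]) ((iter k T) @^-1` post_crit T).
End Defs.

Section Top.
Context {X : topologicalType}.

Definition open_at (T : X -> X) (x : X) : Prop :=
  forall U, nbhs x U -> interior (T @` U) (T x).

Definition crit_points (T : X -> X) : set X := [set x | ~ open_at T x].

Definition locally_injective (T : X -> X) : Prop :=
  forall x : X, exists U, nbhs x U /\
    (forall y z, U y -> U z -> T y = T z -> y = z).

Definition meagre (A : set X) : Prop :=
  exists F : nat -> set X,
    (forall n, interior (closure (F n)) = set0) /\ A = \bigcup_(n in [set: nat]) F n.
End Top.

(* Main.v *)
Require Import Defs.
From HB Require Import structures.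
From mathcomp Require Import all_boot all_order all_algebra.
From mathcomp Require Import all_classical all_reals all_analysis.
Set Implicit Arguments. Unset Strict Implicit. Unset Printing Implicit Defensive.
Import Order.TTheory GRing.Theory Num.Theory numFieldNormedType.Exports.
Local Open Scope classical_set_scope.

Section Meagre.
Context {X : topologicalType}.

Definition nwd (A : set X) := interior (closure A) = set0.

Lemma meagre_sub (A B : set X) : A `<=` B -> meagre B -> meagre A.
Proof.
move=> AB [F [Fn BF]]; exists (fun n => F n `&` A); split.
  move=> n; apply/seteqP; split => // x Hx; rewrite -(Fn n).
  by apply: interiorS Hx; apply: closureS; exact: subIsetl.
apply/seteqP; split => [x Ax|x [n _ [_ Ax]]//].
have := AB _ Ax; rewrite BF => -[n _ Fx]; by exists n.
Qed.

Lemma nwd_meagre (A : set X) : nwd A -> meagre A.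
Proof.
move=> nA; exists (fun n => if n is 0 then A else set0); split.
  case=> [|n] //=; apply/seteqP; split => // x; rewrite closure0.
  by move/nbhs_singleton.
apply/seteqP; split => [x Ax|x [[|n] _ //]]; by exists 0.
Qed.

Lemma meagre_bigcup (A : nat -> set X) :
  (forall n, meagre (A n)) -> meagre (\bigcup_(n in [set: nat]) A n).
Proof.
move=> hA; pose F n := projT1 (cid (hA n)).
have hF n : (forall m, interior (closure (F n m)) = set0) /\
   A n = \bigcup_(m in [set: nat]) F n m by exact: (projT2 (cid (hA n))).
pose G k := match (choice.unpickle k : option (nat * nat)) with
  Some (n, m) => F n m | None => set0 end.
exists G; split.
  move=> k; rewrite /G; case: (choice.unpickle k) => [[n m]|].
    by case: (hF n) => ->.
  apply/seteqP; split => // x; rewrite closure0; by move/nbhs_singleton.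
apply/seteqP; split.
  move=> x [n _]; case: (hF n) => _ -> [m _ Fx].
  exists (choice.pickle (n, m)) => //; by rewrite /G choice.pickleK.
move=> x [k _]; rewrite /G; case: (choice.unpickle k) => [[n m]|//] Fx.
exists n => //; case: (hF n) => _ ->; by exists m.
Qed.

End Meagre.

Section Tlemmas.
Context {X : topologicalType} (T : X -> X).
Hypothesis hT : continuous T.

Definition dop := forall U : set X, open U -> U !=set0 -> exists2 x, U x & open_at T x.

Lemma closure_preimage (N : set X) :
  closure (T @^-1` N) `<=` T @^-1` closure N.
Proof.
move=> u cu B hB; have hB' := hT hB; rewrite /= in hB'.
by have [v [Nv Bv]] := cu _ hB'; exists (T v).
Qed.

Lemma nwd_preimage (N : set X) : dop -> nwd N -> nwd (T @^-1` N).
Proof.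
move=> hd nN; apply/seteqP; split => // x Hx.
set U := interior (closure (T @^-1` N)).
have oU : open U by exact: open_interior.
have [a Ua oa] := hd U oU (ex_intro _ x Hx).
have nU : nbhs a U by apply: open_nbhs_nbhs.
have := oa U nU => hTa.
have : interior (closure N) (T a).
  apply: filterS hTa => _ [u Uu <-].
  by apply: closure_preimage; apply: interior_subset.
by rewrite nN.
Qed.

Lemma nwd_image (N V : set X) : dop -> open V ->
  (forall y z, V y -> V z -> T y = T z -> y = z) ->
  nwd N -> nwd (T @` (N `&` V)).
Proof.
move=> hd oV iV nN; apply/seteqP; split => // y Hy.
set O := interior (closure (T @` (N `&` V))).
have oO : open O by exact: open_interior.
have [_ [[n [Nn Vn] <-] On]] : (T @` (N `&` V)) `&` O !=set0.
  by apply: (interior_subset Hy); apply: nbhs_interior.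
set W := V `&` T @^-1` O.
have oW : open W.
  by apply: openI => //; apply: open_comp => // z _; exact: hT.
have WN : W `<=` closure N.
  move=> w Ww B hB.
  set W' := interior (B `&` W).
  have W'w : W' w by rewrite /W' /interior; apply: filterI => //; exact: open_nbhs_nbhs.
  have [a W'a oa] := hd W' (@open_interior _ _) (ex_intro _ w W'w).
  have hTa := oa W' (open_nbhs_nbhs (conj (@open_interior _ _) W'a)).
  have /interior_subset [Wa1 [Va Wa2]] := W'a.
  have : closure (T @` (N `&` V)) (T a) by exact: (interior_subset Wa2).
  move=> /(_ _ hTa) [_ [[m [Nm Vm] <-] [w' W'w' Tw'm]]].
  have [Bw' [Vw' _]] := interior_subset W'w'.
  have := iV _ _ Vw' Vm Tw'm => ?; subst w'.
  by exists m.
have : interior (closure N) n.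
  have nW : nbhs n W by apply: open_nbhs_nbhs; split => //; split.
  exact: filterS WN nW.
by rewrite nN.
Qed.


Definition injon (V : set X) := forall y z, V y -> V z -> T y = T z -> y = z.

Lemma inj_cover : @second_countable X -> locally_injective T ->
  exists V : nat -> set X, (forall k, open (V k) /\ injon (V k)) /\
    forall x, exists k, V k x.
Proof.
move=> [B cB [Bo Bb]] li.
have [f finj] := countable_injP _ cB.
pose V k := \bigcup_(b in [set b | B b /\ f b = k /\ injon b]) b.
exists V; split.
  move=> k; split.
    by apply: bigcup_open => b [Bb' _]; exact: Bo.
  move=> y z [b1 [B1 [f1 i1]] y1] [b2 [B2 [f2 i2]] z2].
  have e : b1 = b2 by apply: finj; rewrite ?inE //; rewrite f1 f2.
  by subst b2; apply: i1.
move=> x; have [U [nU iU]] := li x.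
have [b [Bbb bx] bU] := Bb x U nU.
exists (f b); exists b => //; split => //; split => // y z yb zb.
by apply: iU; apply: bU.
Qed.

Lemma meagre_preimage (N : set X) : dop -> meagre N -> meagre (T @^-1` N).
Proof.
move=> hd [F [Fn ->]].
have -> : T @^-1` (\bigcup_(n in [set: nat]) F n) =
   \bigcup_(n in [set: nat]) (T @^-1` F n).
  by apply/seteqP; split => x [n _ Fx]; exists n.
by apply: meagre_bigcup => n; apply: nwd_meagre; apply: nwd_preimage.
Qed.

Lemma meagre_image (N : set X) : dop ->
  (exists V : nat -> set X, (forall k, open (V k) /\ injon (V k)) /\
    forall x, exists k, V k x) ->
  meagre N -> meagre (T @` N).
Proof.
move=> hd [V [hV cV]] [F [Fn ->]].
apply: (@meagre_sub _ _ (\bigcup_(n in [set: nat])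
   \bigcup_(k in [set: nat]) (T @` (F n `&` V k)))).
  move=> _ [x [n _ Fx] <-]; have [k Vx] := cV x.
  by exists n => //; exists k => //; exists x.
apply: meagre_bigcup => n; apply: meagre_bigcup => k.
apply: nwd_meagre; case: (hV k) => oV iV.
by apply: nwd_image.
Qed.

End Tlemmas.

Section LCH.
Context {X : topologicalType}.
Hypothesis lc : locally_compact [set: X].
Hypothesis hs : hausdorff_space X.

Lemma cnbhd (x : X) : exists K, [/\ nbhs x K, compact K & closed K].
Proof.
have [K hK [cK clK]] := lc (I : [set: X] x).
exists K; split => //.
by move: hK; rewrite /within /=; apply: filterS => y; apply.
Qed.

Lemma shrink (V : set X) (x : X) : open V -> V x ->
  exists W, [/\ open W, W x, closure W `<=` V & compact (closure W)].
Proof.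
move=> oV Vx; have [K [nK cK clK]] := cnbhd x.
have rx := compact_regular hs cK nK.
have [B nB BV] := rx V (open_nbhs_nbhs (conj oV Vx)).
exists (interior (B `&` K)); split.
- exact: open_interior.
- by rewrite /interior; apply: filterI.
- move=> y /(closureS (@interior_subset _ _)) /closureI [] /BV //.
- apply: (subclosed_compact (@closed_closure _ _) cK).
  move=> y /(closureS (@interior_subset _ _)) /closureI [] _.
  by rewrite -(closure_id K).1.
Qed.

Variable F : nat -> set X.
Hypothesis hF : forall n, nwd (F n).

Lemma and4_3 (P Q S U : Prop) : [/\ P, Q, S & U] -> S.
Proof. by case. Qed.

Definition sS := {W : set X | open W /\ W !=set0}.

Lemma step_ex n (s : sS) : exists W, [/\ open W, W !=set0,
  closure W `<=` sval s `\` closure (F n) & compact (closure W)].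
Proof.
case: s => U [oU [u Uu]] /=.
have [x [Ux nFx]] : exists x, U x /\ ~ closure (F n) x.
  apply: contrapT => hn.
  have : interior (closure (F n)) u.
    apply: filterS (open_nbhs_nbhs (conj oU Uu)) => y Uy.
    by apply: contrapT => ny; apply: hn; exists y.
  by rewrite hF.
have oD : open (U `\` closure (F n)).
  by apply: openI => //; apply: closed_openC; exact: closed_closure.
have [W [oW Wx cW kW]] := shrink oD (conj Ux nFx).
by exists W; split => //; exists x.
Qed.

Definition stepW n s := projT1 (cid (step_ex n s)).
Lemma stepP n s : [/\ open (stepW n s), stepW n s !=set0,
  closure (stepW n s) `<=` sval s `\` closure (F n) & compact (closure (stepW n s))].
Proof. exact: (projT2 (cid (step_ex n s))). Qed.

Definition step n s : sS :=
  exist _ (stepW n s) (let: And4 a b _ _ := stepP n s in conj a b).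

Fixpoint sq (s0 : sS) n : sS := match n with 0 => s0 | n.+1 => step n (sq s0 n) end.

Lemma baire_lch (U : set X) : open U -> U !=set0 ->
  exists2 x, U x & forall n, ~ F n x.
Proof.
move=> oU nU; pose s0 : sS := exist _ U (conj oU nU).
pose Wn n := sval (sq s0 n.+1).
have Wdec n : Wn n.+1 `<=` Wn n.
  move=> y /(@subset_closure _ _) h.
  by have [] := (and4_3 (stepP n.+1 (sq s0 n.+1))) _ h.
have Wmon i j : (i <= j)%N -> Wn j `<=` Wn i.
  elim: j => [|j IH]; first by rewrite leqn0 => /eqP ->.
  rewrite leq_eqVlt => /orP[/eqP ->//|]; rewrite ltnS => /IH h.
  exact: subset_trans (Wdec j) h.
pose G := filter_from [set: nat] Wn.
have FG : Filter G.
  apply: filter_from_filter; first by exists 0%N.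
  move=> i j _ _; exists (maxn i j) => // y Wy; split.
    by apply: (Wmon i (maxn i j)) => //; rewrite leq_maxl.
  by apply: (Wmon j (maxn i j)) => //; rewrite leq_maxr.
have PG : ProperFilter G.
  apply: filter_from_proper => i _; by have [] := stepP i (sq s0 i).
have cK : compact (closure (Wn 0%N)) by have [] := stepP 0 s0.
have [x [_ clx]] := cK G PG (ex_intro2 _ _ 0%N I (@subset_closure _ _)).
have cx n : closure (Wn n) x.
  by rewrite clusterE in clx; apply: clx; exists n.
exists x.
  by have [] := (and4_3 (stepP 0 s0)) _ (cx 0%N).
move=> n Fx.
have [_] := (and4_3 (stepP n (sq s0 n))) _ (cx n).
by apply; apply: subset_closure.
Qed.

End LCH.

Section Bump.
Local Open Scope ring_scope.
Context {R : realType} {X : topologicalType} (T : X -> X).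
Hypothesis lc : locally_compact [set: X].
Hypothesis hs : hausdorff_space X.
Hypothesis li : locally_injective T.

Lemma crit_sub (x : X) : crit_points T x -> @crit_values X R T (T x).
Proof.
move=> cx.
have [U0 [nU0 nTU0]] : exists U0, nbhs x U0 /\ ~ nbhs (T x) (T @` U0).
  apply: contrapT => h; apply: cx => U nU; apply: contrapT => hn.
  by apply: h; exists U.
have [Ui [nUi iUi]] := li x.
have [K [nK cK clK]] := cnbhd lc x.
pose V := interior (U0 `&` Ui `&` K).
have oV : open V by exact: open_interior.
have Vx : V x by rewrite /V /interior; apply: filterI => //; apply: filterI.
have crs := @locally_compact_completely_regular X R lc hs.
have clB : closed (~` V) by rewrite closedC.
have sep := crs x (~` V) clB (fun h => h Vx).
pose g := @Urysohn X R [set x] (~` V).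
have g0 : g x = 0 by apply: (Urysohn_sub0 sep); exists x.
have g1 y : ~ V y -> g y = 1 by move=> nV; apply: (Urysohn_sub1 sep); exists y.
pose f := fun y => 1 - g y.
have fV y : f y != 0 -> V y.
  move=> h; apply: contrapT => nV; move: h; by rewrite /f g1 // subrr eqxx.
exists f; split.
  split.
    move=> y; apply: cvgB; first exact: cvg_cst.
    exact: Urysohn_continuous.
  apply: (subclosed_compact (@closed_closure _ _) cK).
  move=> y /(closureS fV) /(closureS (@interior_subset _ _)).
  move=> /closureI [_]; by rewrite -(closure_id K).1.
move=> hc.
have Tx1 : transfer T f (T x) = 1.
  rewrite /transfer -(fsbig_widen [set x] (T @^-1` [set T x]) f) ?fsbig_set1.
  - by rewrite /f g0 subr0.
  - by move=> y ->.
  move=> y [/= Tyx nyx]; apply: contrapT => fy0.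
  have fy : f y != 0 by apply/eqP.
  have := interior_subset (fV _ fy) => -[[_ Uy] _].
  by apply: nyx; apply: iUi => //; apply: nbhs_singleton.
have hn : nbhs (T x) (transfer T f @^-1` [set r : R | r != 0]).
  have h1 : nbhs (transfer T f (T x)) [set r : R | r != 0].
    apply: open_nbhs_nbhs; split; first exact: open_neq.
    by rewrite /= Tx1 oner_eq0.
  exact: hc h1.
 apply: nTU0; apply: filterS hn => z /= hz.
have [y /= Tyz fy] := @fsbigN1 _ _ _ unit X _ (fun _ => f) tt hz.
exists y => //.
by have := interior_subset (fV _ fy) => -[[]].
Qed.

End Bump.

Lemma compact_discrete_finite {X : topologicalType} (A : set X) :
  compact A -> (forall p, A p -> exists U, nbhs p U /\ U `&` A `<=` [set p]) ->
  finite_set A.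
Proof.
move=> cA dA; apply: contrapT => iA.
pose G := fun S : set X => finite_set (A `\` S).
have FG : Filter G.
  constructor.
  - by rewrite /G setDT; exact: finite_set0.
  - move=> S1 S2 h1 h2; rewrite /G.
    apply: (@sub_finite_set _ _ ((A `\` S1) `|` (A `\` S2))).
      by move=> x [Ax /not_andP [h|h]]; [left|right].
    by rewrite finite_setU.
  - move=> S1 S2 S12 h1; apply: sub_finite_set h1 => x [Ax nS2]; split => //.
    by move=> /S12.
have PG : ProperFilter G.
  by constructor => // h; apply: iA; move: h; rewrite /G setD0.
have GA : G A by rewrite /G setDv; exact: finite_set0.
have [p [Ap cp]] := cA G PG GA.
have [U [nU UA]] := dA p Ap.
have GS : G (A `\` [set p]).
  apply: (@sub_finite_set _ _ [set p]); last exact: finite_set1.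
  move=> x [Ax /not_andP [//|]]; by move/contrapT.
have [q [[Aq nqp] Uq]] := cp _ _ GS nU.
by apply: nqp; apply: UA.
Qed.

Lemma near_finite {T : Type} {I : choiceType} (F : set_system T) {FF : Filter F}
    (P : set I) (Q : I -> T -> Prop) : finite_set P ->
  (forall i, P i -> F (Q i)) ->
  F [set z | forall i, P i -> Q i z].
Proof.
move=> fP hQ.
have := @filter_bigI T I (fset_set P) (fun i => Q i) F FF.
rewrite fset_setK // => /(_ _) h.
apply: filterS (h _) => [z hz i Pi|i]; first exact: hz.
by rewrite in_fset_set // inE; exact: hQ.
Qed.

From mathcomp Require Import finmap.

Section CV.
Local Open Scope ring_scope.
Context {R : realType} {X : topologicalType} (T : X -> X).
Hypothesis hs : hausdorff_space X.
Hypothesis li : locally_injective T.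
Hypothesis hT : continuous T.

Lemma cv_cont (y : X) : (forall x, T x = y -> open_at T x) ->
  forall f : X -> R, Cc f -> {for y, continuous (transfer T f)}.
Proof.
move=> hy f [cf cK].
set S := [set x | f x != 0]; set K := closure S.
pose P := K `&` T @^-1` [set y].
have clP1 : closed (T @^-1` [set y]).
  rewrite -[T @^-1` _]setCK closedC preimage_setC.
  apply: (continuousP _).1 => //; apply: closed_openC.
  exact: accessible_closed_set1 (hausdorff_accessible hs) y.
have cP : compact P by exact: compact_closedI.
have fP : finite_set P.
  apply: (compact_discrete_finite cP) => p [_ Tp].
  have [U [nU iU]] := li p; exists U; split => // q [Uq [_ Tq]].
  by apply: iU => //; [exact: nbhs_singleton | rewrite Tq Tp].
pose Uc p := projT1 (cid (li p)).
have hU p : nbhs p (Uc p) /\ injon T (Uc p) := projT2 (cid (li p)).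
pose g z p := xget p [set w | Uc p w /\ T w = z].
have gP z p : (T @` Uc p) z -> Uc p (g z p) /\ T (g z p) = z.
  by case => w Uw Twz; apply: (@xgetPex X p [set w | Uc p w /\ T w = z]); exists w.
have Lg p : P p -> (fun z => g z p) @ y --> p.
  move=> [_ Tp] V /= nV.
  have nVU : nbhs p (V `&` Uc p) by apply: filterI => //; exact: (hU p).1.
  have op := hy p Tp (V `&` Uc p) nVU.
  rewrite Tp in op; apply: filterS op => z [w [Vw Uw] Twz].
  have [Ug Tg] := gP z p (ex_intro2 _ _ w Uw Twz).
  have e : g z p = w by apply: (hU p).2 => //; rewrite Tg Twz.
  by rewrite /= e.
have N1 : \forall z \near y, forall p, P p -> (T @` Uc p) z.
  apply: (@near_finite X _ (nbhs y) (nbhs_filter y)) => // p [_ Tp].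
  by have := hy p Tp (Uc p) (hU p).1; rewrite Tp.
pose K' := K `&` ~` (\bigcup_(p in P) interior (Uc p)).
have clK' : closed K'.
  apply: closedI; first exact: closed_closure.
  rewrite closedC; apply: bigcup_open => p _; exact: open_interior.
have cK' : compact K' by apply: (subclosed_compact clK' cK); exact: subIsetl.
have cTK' : compact (T @` K').
  by apply: continuous_compact => //; exact: continuous_subspaceT.
have N2 : nbhs y (~` (T @` K')).
  apply: open_nbhs_nbhs; split; first by apply: closed_openC; exact: compact_closed.
  move=> [k [Kk nk] Tky]; apply: nk; exists k; first by split.
  exact: (hU k).1.
have N3 : \forall z \near y, forall pq, (P `*` P) pq -> pq.1 != pq.2 ->
    g z pq.1 != g z pq.2.
  apply: (@near_finite X _ (nbhs y) (nbhs_filter y)); first exact: finite_setX.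
  move=> [p q] [/= Pp Pq].
  have [->|npq] := eqVneq p q; first by apply: nearW => z; rewrite eqxx.
  have [[A B] [/= Ap Bq] [oA oB /eqP AB0]] := (eq_ind _ id hs _ (@open_hausdorff X)) p q npq.
  have nA : nbhs p A by apply: open_nbhs_nbhs; split => //; exact: set_mem.
  have nB : nbhs q B by apply: open_nbhs_nbhs; split => //; exact: set_mem.
  have hA : nbhs y [set z | A (g z p)] := Lg p Pp A nA.
  have hB : nbhs y [set z | B (g z q)] := Lg q Pq B nB.
  have hAB := @filterI _ _ (nbhs_filter y) _ _ hA hB.
  apply: filterS hAB => z [/= zA zB] _; apply/eqP => e.
  have : (A `&` B) (g z q) by split => //; rewrite -e.
  by rewrite AB0.
have Neq : \forall z \near y, \sum_(p \in P) f (g z p) = transfer T f z.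
  have N := @filterI _ _ (nbhs_filter y) _ _ N1 (@filterI _ _ (nbhs_filter y) _ _ N2 N3).
  apply: filterS N => z [h1 [h2 h3]].
  rewrite /transfer -(fsbig_widen (g z @` P) (T @^-1` [set z]) f).
  - rewrite fsbig_image //.
    move=> a b /set_mem Pa /set_mem Pb e; apply: contrapT => /eqP neq.
    by have := h3 (a, b) (conj Pa Pb) neq; rewrite /= e eqxx.
  - by move=> _ [p Pp <-]; exact: (gP z p (h1 p Pp)).2.
  move=> w [/= Twz nimg]; apply: contrapT => fw0.
  have fw : f w != 0 by apply/eqP.
  have Kw : K w by apply: subset_closure.
  have [p Pp Iw] : (\bigcup_(p in P) interior (Uc p)) w.
    apply: contrapT => nb; apply: h2; exists w => //.
  apply: nimg; exists p => //.
  have [Ug Tg] := gP z p (h1 p Pp).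
  apply: (hU p).2 => //; first exact: interior_subset.
  by rewrite Tg Twz.
have Ey : transfer T f y = \sum_(p \in P) f p.
  rewrite /transfer -(fsbig_widen P (T @^-1` [set y]) f) //.
    by move=> p [].
  move=> w [/= Twy nPw]; apply: contrapT => fw0.
  have fw : f w != 0 by apply/eqP.
  by apply: nPw; split => //; apply: subset_closure.
have Lim : (fun z => \sum_(p \in P) f (g z p)) @ y --> \sum_(p \in P) f p.
  have -> : (fun z => \sum_(p \in P) f (g z p)) =
     (fun z => \sum_(p <- (fset_set P : seq X) | p \in fset_set P) f (g z p)).
    by apply: funext => z; rewrite fsbig_finite // big_seq.
  rewrite fsbig_finite // big_seq.
  apply: cvg_big; first exact: add_continuous.
  move=> p; rewrite in_fset_set // => /set_mem Pp.
  exact: cvg_comp (Lg p Pp) (cf p).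
suff h : transfer T f @ y --> transfer T f y by exact: h.
rewrite Ey.
by apply: cvg_trans Lim; apply: near_eq_cvg.
Qed.

End CV.

Theorem corollary4p12 (R : realType) (X : topologicalType) (T : X -> X) :
  @second_countable X -> locally_compact [set: X] -> hausdorff_space X ->
  continuous T -> locally_injective T ->
  (meagre (@sat_crit X R T) <-> meagre (crit_points T)).
Proof.
move=> sc lc hs hT li; split.
  apply: meagre_sub => x cx; exists 1%N => //=.
  by exists 0%N => //; exists (T x) => //; exact: crit_sub.
move=> mC.
have hd : dop T.
  case: mC => F [hF eC] U oU nU.
  have [x Ux nF] := baire_lch lc hs hF oU nU.
  exists x => //; apply: contrapT => nx.
  have : crit_points T x by [].
  by rewrite eC => -[n _ /nF].
have cov := inj_cover sc li.
have mCV : meagre (@crit_values X R T).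
  apply: (@meagre_sub _ _ (T @` crit_points T)); last exact: meagre_image.
  move=> y cy; apply: contrapT => ny.
  case: cy => f [cf nc]; apply: nc.
  apply: (cv_cont hs li hT) => // x Txy; apply: contrapT => nx.
  by apply: ny; exists x.
have mI n (A : set X) : meagre A -> meagre (iter n T @` A).
  elim: n A => [|n IH] A mA.
    by apply: (meagre_sub _ mA) => _ [x Ax <-].
  apply: (@meagre_sub _ _ (T @` (iter n T @` A))).
    by move=> _ [x Ax <-]; exists (iter n T x) => //; exists x.
  by apply: meagre_image => //; exact: IH.
have mP n (A : set X) : meagre A -> meagre (iter n T @^-1` A).
  elim: n A => [|n IH] A mA.
    by apply: (meagre_sub _ mA) => x.
  apply: (@meagre_sub _ _ (iter n T @^-1` (T @^-1` A))) => //.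
  by apply: IH; exact: meagre_preimage.
apply: meagre_bigcup => k; apply: mP.
by apply: meagre_bigcup => n; exact: mI.
Qed.
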